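(* Let $m$ be a given positive integer and let $f:C(\mathbb{R}^{n})\rightarrow\mathbb{R}$ be a distribution of the form $f = \sum_{k = 1}^{m}a_{k}\delta_{x_{k}}$, with $x_{i}\in\mathbb{R}^{n}$, $a_{i}\in\mathbb{R}\setminus\{0\}$, $1\leq i\leq m$, such that $x_{i}\neq x_{j}$ and $a_{i}\neq a_{j}$ whenever $i\neq j$. Assume that the spherical mean transform of $f$ is given at $\frac{1}{2}(n\cdot m(m - 1) + 2n + 2)$ points such that there is no hyperplane in $\mathbb{R}^{n}$ which contains more than $n$ of these given points. Then the points $x_{1},\dots,x_{m}$ and the amplitudes $a_{1},\dots,a_{m}$ can be uniquely recovered.
   Context: $C(\mathbb{R}^{n})$ denotes the continuous real functions on $\mathbb{R}^{n}$, $C(\mathbb{R}^{+})$ the continuous real functions on $\mathbb{R}^{+}=[0,\infty)$. For $x_{0}\in\mathbb{R}^{n}$, $\delta_{x_{0}}$ is the distribution $\delta_{x_{0}}(\phi)=\phi(x_{0})$ on $C(\mathbb{R}^{n})$. For a function $\phi\in C(\mathbb{R}^n)$ and a point $y\in\mathbb{R}^{n}$, the spherical mean transform (SMT) is $R_{y}\phi(t) = t^{n-1}\int_{|\theta|=1}\phi(y+t\theta)\,d\theta$, $t\geq 0$; its dual is $R_{y}^{\ast}\Lambda(z)=\Lambda(|y-z|)$ for $\Lambda\in C(\mathbb{R}^{+})$. For a distribution $T:C(\mathbb{R}^{n})\to\mathbb{R}$, the SMT of $T$ at $y$ is the map $R_{y}T:C(\mathbb{R}^{+})\to\mathbb{R}$,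 $(R_{y}T)(\Lambda)=T(\Lambda(|y-\cdot|))$. ''The SMT of $f$ is given at a point $y$'' means $R_{y}f$ is known. *)

(* Defs.v *)
From HB Require Import structures.
From mathcomp Require Import all_boot all_order all_algebra.
From mathcomp Require Import all_classical all_reals all_analysis.
Set Implicit Arguments. Unset Strict Implicit. Unset Printing Implicit Defensive.
Import Order.TTheory GRing.Theory Num.Theory.
Import numFieldNormedType.Exports.
Local Open Scope ring_scope.
Local Open Scope classical_set_scope.

Definition pt (R : realType) (n : nat) := 'I_n -> R.

Definition edist (R : realType) (n : nat) (y z : pt R n) : R :=
  Num.sqrt (\sum_(i < n) (y i - z i) ^+ 2).

(* Distributions acting on functions R^n -> R (only applied to continuous ones). *)
Definition distr_n (R : realType) (n : nat) := (pt R n -> R) -> R.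

Definition delta_pt (R : realType) (n : nat) (x0 : pt R n) : distr_n R n :=
  fun phi => phi x0.

Definition dirac_comb (R : realType) (n m : nat) (a : 'I_m -> R) (x : 'I_m -> pt R n)
  : distr_n R n := fun phi => \sum_(k < m) a k * delta_pt (x k) phi.

Definition SMT (R : realType) (n : nat) (y : pt R n) (T : distr_n R n) :
  (R -> R) -> R := fun Lam => T (fun z => Lam (edist y z)).

Definition SMT_eq_at (R : realType) (n : nat) (y : pt R n) (T T' : distr_n R n) : Prop :=
  forall Lam : R -> R, {within `[0%R, +oo[%classic, continuous (Lam : R -> R)} ->
    SMT y T Lam = SMT y T' Lam.

Definition in_hyperplane (R : realType) (n : nat) (c : pt R n) (d : R) (z : pt R n) : bool :=
  \sum_(i < n) c i * z i == d.

Definition no_hyperplane_more_than_n (R : realType) (n N : nat) (y : 'I_N -> pt R n) : Prop :=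
  forall (c : pt R n) (d : R), (exists i, c i != 0) ->
    (#|[set j : 'I_N | in_hyperplane c d (y j)]| <= n)%N.

Definition admissible (R : realType) (n m : nat) (a : 'I_m -> R) (x : 'I_m -> pt R n) : Prop :=
  injective x /\ injective a /\ (forall k, a k != 0).

(* Main.v *)
From Pilot Require Import Defs.
From HB Require Import structures.
From mathcomp Require Import all_boot all_order all_algebra.
From mathcomp Require Import all_classical all_reals all_analysis.
From mathcomp Require Import perm.
From mathcomp Require Import ring lra zify.
Import Order.TTheory GRing.Theory Num.Theory.
Local Open Scope ring_scope.
Import numFieldNormedType.Exports.
Local Notation ed := Pilot.Defs.edist.

Lemma bisector (R : realType) (n : nat) (y p q : pt R n) :
  ed y p = ed y q ->
  in_hyperplane (fun i => 2 * (q i - p i))%R (\sum_(i < n) (q i ^+ 2 - p i ^+ 2))%R y.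
Proof.
rewrite /Defs.edist => /eqP; rewrite eqr_sqrt; last 2 first.
- by apply: sumr_ge0 => i _; exact: sqr_ge0.
- by apply: sumr_ge0 => i _; exact: sqr_ge0.
move=> /eqP E; rewrite /in_hyperplane -subr_eq0 -sumrB.
have -> : \sum_(i < n) (2 * (q i - p i) * y i - (q i ^+ 2 - p i ^+ 2)) =
   \sum_(i < n) ((y i - p i) ^+ 2 - (y i - q i) ^+ 2).
  by apply: eq_bigr => i _; ring.
by rewrite sumrB E subrr.
Qed.

Lemma nz_diff (R : realType) (n : nat) (p q : pt R n) :
  p <> q -> exists i, 2 * (q i - p i) != 0.
Proof.
move=> npq; case: (pselect (exists i, 2 * (q i - p i) != 0)) => // H.
exfalso; apply: npq; apply/funext => i.
have : 2 * (q i - p i) == 0 by apply/negPn/negP => h; apply: H; exists i.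
by rewrite mulf_eq0 pnatr_eq0 /= subr_eq0 => /eqP.
Qed.

Lemma union_bound (I T : finType) (P : pred I) (F : I -> {set T}) :
  (#|\bigcup_(i | P i) F i| <= \sum_(i | P i) #|F i|)%N.
Proof.
elim/big_ind2 : _ => // [|m1 A n1 B Am Bn]; first by rewrite cards0.
by rewrite (leq_trans (leq_card_setU _ _))// leq_add.
Qed.

Lemma pair_count (m c : nat) :
  (2 * \sum_(i < m) \sum_(j < m | (i < j)%N) c = c * (m * (m - 1)))%N.
Proof.
elim: m => [|m IH].
  rewrite big_ord0; lia.
rewrite (big_ord_recr m) /=.
rewrite [X in (_ + X)%N]big_pred0; last by move=> j; rewrite ltnNge -ltnS ltn_ord.
have E : forall i : 'I_m, (\sum_(j < m.+1 | (i < j)%N) c =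
   \sum_(j < m | (i < j)%N) c + c)%N.
  by move=> i; rewrite big_mkcond (big_ord_recr m) /= ltn_ord -big_mkcond.
rewrite (eq_bigr _ (fun i _ => E i)) big_split /= sum_nat_const card_ord.
rewrite addn0 mulnDr IH; case: m {IH E} => [|m] /=; first by rewrite muln0.
rewrite subn1 /= subSS subn0. nia.
Qed.

Lemma extract (R : realType) (n m : nat) (y : pt R n) (a b : 'I_m -> R) (x z : 'I_m -> pt R n)
  (hs : SMT_eq_at y (dirac_comb a x) (dirac_comb b z)) (r : R) :
  \sum_(k | ed y (x k) == r) a k = \sum_(k | ed y (z k) == r) b k.
Proof.
set S := [seq t <- [seq ed y (x k) | k <- enum 'I_m] ++ [seq ed y (z k) | k <- enum 'I_m] | t != r].
set P := \prod_(s <- S) ('X - s%:P).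
have hsP := hs (horner P).
have /hsP : ({within `[0%R, +oo[, continuous (horner P : R -> R)})%classic.
  apply: continuous_subspaceT => t; exact: continuous_horner. rewrite /SMT /dirac_comb /delta_pt.
have Pr : P.[r] != 0.
  apply/negP => h; have : root P r := h.
  by rewrite /P root_prod_XsubC mem_filter eqxx.
have split_sum : forall (c : 'I_m -> R) (w : 'I_m -> pt R n),
    (forall k, ed y (w k) \in S \/ ed y (w k) = r) ->
    \sum_(k < m) c k * P.[ed y (w k)] = (\sum_(k | ed y (w k) == r) c k) * P.[r].
  move=> c w hw; rewrite (bigID (fun k => ed y (w k) == r)) /=.
  rewrite [X in _ + X]big1 ?addr0; last first.
    move=> k hk; case: (hw k) => [hS|]; last by move/eqP; rewrite (negbTE hk).
    have hr : root P (ed y (w k)) by rewrite /P root_prod_XsubC.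
    by apply/eqP; rewrite mulf_eq0; apply/orP; right; exact: hr.
  by rewrite mulr_suml; apply: eq_bigr => k /eqP ->.
rewrite !split_sum; first by move/(mulIf Pr).
- move=> k; case: (eqVneq (ed y (z k)) r) => [->|h]; [by right|left].
  by rewrite mem_filter h mem_cat; apply/orP; right; apply/map_f; rewrite mem_enum.
- move=> k; case: (eqVneq (ed y (x k)) r) => [->|h]; [by right|left].
  by rewrite mem_filter h mem_cat; apply/orP; left; apply/map_f; rewrite mem_enum.
Qed.

Lemma matching (R : realType) (n m : nat) (y : pt R n) (a b : 'I_m -> R) (x z : 'I_m -> pt R n)
  (ha : forall k, a k != 0)
  (hs : SMT_eq_at y (dirac_comb a x) (dirac_comb b z))
  (hd : forall i j, ed y (x i) = ed y (x j) -> i = j) :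
  exists g : 'I_m -> 'I_m, forall k, b (g k) = a k /\ ed y (z (g k)) = ed y (x k).
Proof.
have E k := @extract _ _ _ _ _ _ _ _ hs (ed y (x k)).
have Ea k : \sum_(l | ed y (x l) == ed y (x k)) a l = a k.
  by rewrite (big_pred1 k) // => l /=; apply/eqP/eqP => [/hd|->].
have ex k : exists l, ed y (z l) == ed y (x k).
  have := E k; rewrite Ea => h; case: (pselect (exists l, ed y (z l) == ed y (x k))) => // H.
  exfalso; move: (ha k); rewrite h big_pred0 ?eqxx // => l.
  by apply/negbTE/negP => hl; apply: H; exists l.
pose g k := odflt k [pick l | ed y (z l) == ed y (x k)].
have hg k : ed y (z (g k)) = ed y (x k).
  rewrite /g; case: pickP => [l /eqP //|H]; case: (ex k) => l; by rewrite H.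
have ginj : injective g by move=> k k' e; apply: hd; rewrite -!hg e.
have [gi gK Kg] := injF_bij ginj.
have uq k l : ed y (z l) == ed y (x k) -> l = g k.
  move=> /eqP h; rewrite -(Kg l); congr g; apply: hd; rewrite -hg Kg; exact: h.
exists g => k; split => //.
have := E k; rewrite Ea (big_pred1 (g k)); first by move->.
move=> l /=; apply/idP/eqP => [/uq //|->]; by rewrite hg eqxx.
Qed.

Lemma card_classic (T : finType) (P : pred T) :
  #|([set j | P j])%classic| = #|[set j | P j]|.
Proof. by apply: eq_card => j; rewrite inE; apply/idP/idP; rewrite in_setE. Qed.

Theorem theorem3p1 (R : realType) (n m : nat) (hm : (0 < m)%N)
  (y : 'I_((n * (m * (m - 1)) + 2 * n + 2) %/ 2) -> pt R n)
  (hy_inj : injective y) (hy : no_hyperplane_more_than_n y)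
  (a b : 'I_m -> R) (x z : 'I_m -> pt R n)
  (hf : admissible a x) (hg : admissible b z)
  (hsmt : forall j, SMT_eq_at (y j) (dirac_comb a x) (dirac_comb b z)) :
  exists s : 'S_m, forall k, z k = x (s k) /\ b k = a (s k).
Proof.
case: hf => xinj [ainj anz]; case: hg => zinj [binj bnz].
pose c (i i' : 'I_m) : pt R n := fun t => 2 * (x i' t - x i t).
pose d (i i' : 'I_m) := \sum_(t < n) (x i' t ^+ 2 - x i t ^+ 2).
pose H i i' := [set j | in_hyperplane (c i i') (d i i') (y j)].
pose Bad := \bigcup_(i < m) \bigcup_(i' < m | (i < i')%N) H i i'.
pose G := ~: Bad.
have cardH i i' : i != i' -> (#|H i i'| <= n)%N.
  move=> ne; have := hy (c i i') (d i i'); rewrite card_classic; apply.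
  apply: (@nz_diff _ _ _ _) => e; by rewrite (xinj _ _ e) eqxx in ne.
have cardBad : (2 * #|Bad| <= n * (m * (m - 1)))%N.
  have h : (#|Bad| <= \sum_(i < m) \sum_(i' < m | (i < i')%N) n)%N.
    rewrite /Bad; apply: (leq_trans (union_bound _ _ _ _)); apply: leq_sum => i _.
    apply: (leq_trans (union_bound _ _ _ _)); apply: leq_sum => i' hii'.
    by apply: cardH; rewrite neq_ltn hii'.
  apply: (leq_trans _ (eq_leq (pair_count m n))).
  by rewrite leq_mul2l h orbT.
have cardG : (n.+1 <= #|G|)%N.
  have := cardsC Bad; rewrite card_ord -/G; nia.
have good j : j \in G -> forall i i', ed (y j) (x i) = ed (y j) (x i') -> i = i'.
  move=> jG i i' e; apply/eqP; apply/negP => ne.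
  move: jG; rewrite /G inE => /negP; apply; apply/bigcupP.
  case: (ltngtP i i') => [lt|lt|eq].
  - exists i => //; apply/bigcupP; exists i' => //; rewrite /H inE; exact: (@bisector _ _ _ _ _ e).
  - exists i' => //; apply/bigcupP; exists i => //; rewrite /H inE; exact: (@bisector _ _ _ _ _ (esym e)).
  - by exfalso; apply: ne; rewrite (val_inj eq).
have [j0 j0G] : exists j, j \in G.
  have : (0 < #|G|)%N by apply: leq_trans cardG.
  by case/card_gt0P => j; exists j.
have [g0 hg0] := @matching _ _ _ _ a b x z anz (hsmt j0) (good j0 j0G).
have g0inj : injective g0.
  by move=> k k' e; apply: ainj; rewrite -(hg0 k).1 -(hg0 k').1 e.
pose sp := perm g0inj.
exists (sp^-1)%g => k.
have e1 : g0 ((sp^-1)%g k) = k by have := permKV sp k; rewrite permE.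
set k' := (sp^-1)%g k.
split; last by rewrite -{1}e1; exact: (hg0 k').1.
rewrite -e1; case: (pselect (z (g0 k') = x k')) => // ne; exfalso.
pose H' := [set j | in_hyperplane (fun t => 2 * (z (g0 k') t - x k' t))
   (\sum_(t < n) (z (g0 k') t ^+ 2 - x k' t ^+ 2)) (y j)].
have cH' : (#|H'| <= n)%N.
  by have := hy _ (\sum_(t < n) (z (g0 k') t ^+ 2 - x k' t ^+ 2)) (@nz_diff _ _ _ _ (fun e => ne (esym e))); rewrite card_classic.
have sub : G \subset H'.
  apply/fintype.subsetP => j jG; rewrite inE; apply: bisector.
  have [gj hgj] := @matching _ _ _ _ a b x z anz (hsmt j) (good j jG).
  have <- : gj k' = g0 k' by apply: binj; rewrite (hgj k').1 (hg0 k').1.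
  exact: (esym (hgj k').2).
have := subset_leq_card sub; lia.
Qed.
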